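(* Let $H$ be the Horn matrix. Let $A$ be a real symmetric $5\times 5$ matrix with $\langle A, H\rangle = 0$ and $A \in \partial\mathcal{CP}_5\cap \mathcal{DNN}_5^\circ$. Then $A$ has a factorization $A=BB^{\mathsf T}$ where \[ B = \begin{pmatrix} 1& 0&0& y_4& y_5+1 \\ y_1+1 & 1& 0 &0& y_5\\ y_1 & y_2+1 & 1 & 0& 0\\ 0 & y_2& y_3+1&1& 0\\ 0&0&y_3&y_4+1&1 \end{pmatrix} \operatorname{diag}(z_1,z_2,z_3,z_4,z_5) \] for some positive real numbers $y_1,\dots,y_5,z_1,\dots,z_5$.
   Context: $Sym_5$ is the space of real symmetric $5\times 5$ matrices with inner product $\langle A,B\rangle=\operatorname{trace}(A^{\mathsf T}B)$. $\mathcal{CP}_5$ is the cone of matrices $A=BB^{\mathsf T}$ with $B$ a $5\times k$ matrix with nonnegative entries (some $k$); $\mathcal{DNN}_5$ is the cone of positive semidefinite $5\times 5$ matrices with nonnegative entries. $\partial$ denotes boundary and ${}^\circ$ interior (Euclidean topology in $Sym_5$). The Horn matrix is \[H=\begin{pmatrix} 1 & -1 &1& 1& -1 \\ -1 & 1& -1 &1& 1\\ 1 & -1 & 1 & -1 & 1\\ 1 & 1& -1&1& -1\\ -1&1&1&-1&1\end{pmatrix}.\] *)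

(* Defs.v *)
From HB Require Import structures.
From mathcomp Require Import all_boot all_order all_algebra.
From mathcomp Require Import reals.
Set Implicit Arguments. Unset Strict Implicit. Unset Printing Implicit Defensive.
Import Order.TTheory GRing.Theory Num.Theory.
Local Open Scope ring_scope.

Section Defs.
Variable R : realType.

Definition symmetric5 (A : 'M[R]_5) : Prop := A^T = A.

Definition frob (A B : 'M[R]_5) : R := \tr (A^T *m B).

Definition fnorm (A : 'M[R]_5) : R := Num.sqrt (frob A A).

Definition CP5 (A : 'M[R]_5) : Prop :=
  exists (k : nat) (B : 'M[R]_(5, k)), (forall i j, 0 <= B i j) /\ A = B *m B^T.

Definition psd5 (A : 'M[R]_5) : Prop :=
  symmetric5 A /\ forall x : 'cV[R]_5, 0 <= (x^T *m A *m x) 0 0.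

Definition DNN5 (A : 'M[R]_5) : Prop := psd5 A /\ forall i j, 0 <= A i j.

(* interior and boundary relative to the space Sym_5 *)
Definition interior5 (S : 'M[R]_5 -> Prop) (A : 'M[R]_5) : Prop :=
  symmetric5 A /\ exists e : R, 0 < e /\
    forall X : 'M[R]_5, symmetric5 X -> fnorm (X - A) < e -> S X.

Definition closure5 (S : 'M[R]_5 -> Prop) (A : 'M[R]_5) : Prop :=
  symmetric5 A /\ forall e : R, 0 < e ->
    exists X : 'M[R]_5, symmetric5 X /\ S X /\ fnorm (X - A) < e.

Definition boundary5 (S : 'M[R]_5 -> Prop) (A : 'M[R]_5) : Prop :=
  closure5 S A /\ ~ interior5 S A.

Definition horn_entry (i j : nat) : R :=
  match i, j with
  | 0, 0 => 1 | 0, 1 => -1 | 0, 2 => 1 | 0, 3 => 1 | 0, 4 => -1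
  | 1, 0 => -1 | 1, 1 => 1 | 1, 2 => -1 | 1, 3 => 1 | 1, 4 => 1
  | 2, 0 => 1 | 2, 1 => -1 | 2, 2 => 1 | 2, 3 => -1 | 2, 4 => 1
  | 3, 0 => 1 | 3, 1 => 1 | 3, 2 => -1 | 3, 3 => 1 | 3, 4 => -1
  | 4, 0 => -1 | 4, 1 => 1 | 4, 2 => 1 | 4, 3 => -1 | 4, 4 => 1
  | _, _ => 0
  end.

Definition Horn : 'M[R]_5 := \matrix_(i < 5, j < 5) horn_entry i j.

Definition Yentry (y1 y2 y3 y4 y5 : R) (i j : nat) : R :=
  match i, j with
  | 0, 0 => 1      | 0, 3 => y4     | 0, 4 => y5 + 1
  | 1, 0 => y1 + 1 | 1, 1 => 1      | 1, 4 => y5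
  | 2, 0 => y1     | 2, 1 => y2 + 1 | 2, 2 => 1
  | 3, 1 => y2     | 3, 2 => y3 + 1 | 3, 3 => 1
  | 4, 2 => y3     | 4, 3 => y4 + 1 | 4, 4 => 1
  | _, _ => 0
  end.

Definition Ymat (y1 y2 y3 y4 y5 : R) : 'M[R]_5 :=
  \matrix_(i < 5, j < 5) Yentry y1 y2 y3 y4 y5 i j.

Definition diag5 (z1 z2 z3 z4 z5 : R) : 'M[R]_5 :=
  diag_mx (\row_(j < 5) [:: z1; z2; z3; z4; z5]`_j).

End Defs.

(* Main.v *)
Require Import Defs.
From HB Require Import structures.
From mathcomp Require Import all_boot all_order all_algebra.
From mathcomp Require Import reals.
From mathcomp Require Import ring lra.
Set Implicit Arguments. Unset Strict Implicit. Unset Printing Implicit Defensive.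
Import Order.TTheory GRing.Theory Num.Theory.
Local Open Scope ring_scope.

Definition o0 : 'I_5 := @Ordinal 5 0 isT.
Definition o1 : 'I_5 := @Ordinal 5 1 isT.
Definition o2 : 'I_5 := @Ordinal 5 2 isT.
Definition o3 : 'I_5 := @Ordinal 5 3 isT.
Definition o4 : 'I_5 := @Ordinal 5 4 isT.

Lemma sum5 (R : nmodType) (F : 'I_5 -> R) :
  \sum_(i < 5) F i = F o0 + F o1 + F o2 + F o3 + F o4.
Proof.
rewrite !big_ord_recr big_ord0 /= add0r.
by congr (_ + _ + _ + _ + _); congr F; apply: val_inj.
Qed.

Lemma ord5P (P : 'I_5 -> Prop) : P o0 -> P o1 -> P o2 -> P o3 -> P o4 -> forall i, P i.
Proof.
move=> h0 h1 h2 h3 h4 [[|[|[|[|[|n]]]]] hn] //.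
- by rewrite (_ : Ordinal hn = o0) //; apply: val_inj.
- by rewrite (_ : Ordinal hn = o1) //; apply: val_inj.
- by rewrite (_ : Ordinal hn = o2) //; apply: val_inj.
- by rewrite (_ : Ordinal hn = o3) //; apply: val_inj.
- by rewrite (_ : Ordinal hn = o4) //; apply: val_inj.
Qed.

Section S1.
Variable R : realType.

Definition bf (W : 'M[R]_5) (b : 'I_5 -> R) :=
  \sum_(i < 5) \sum_(k < 5) W i k * b i * b k.
Definition bil (W : 'M[R]_5) (u v : 'I_5 -> R) :=
  \sum_(i < 5) \sum_(k < 5) W i k * u i * v k.
Definition LW (W M : 'M[R]_5) := \sum_(i < 5) \sum_(k < 5) W i k * M i k.

Lemma LW_CP (W : 'M[R]_5) k (B : 'M[R]_(5, k)) :
  LW W (B *m B^T) = \sum_(l < k) bf W (fun i => B i l).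
Proof.
rewrite /LW /bf.
transitivity (\sum_(i < 5) \sum_(l < k) \sum_(j < 5) W i j * B i l * B j l).
  apply: eq_bigr => i _; rewrite exchange_big /=; apply: eq_bigr => j _.
  rewrite !mxE mulr_sumr; apply: eq_bigr => l _; rewrite !mxE; ring.
by rewrite exchange_big.
Qed.

Lemma LW_sub (W M N : 'M[R]_5) : LW W (M - N) = LW W M - LW W N.
Proof.
rewrite /LW -sumrB; apply: eq_bigr => i _; rewrite -sumrB; apply: eq_bigr => k _.
by rewrite !mxE; ring.
Qed.

Lemma LW_bound (W M : 'M[R]_5) (m e : R) :
  (forall i k, `|W i k| <= m) -> (forall i k, `|M i k| <= e) ->
  `|LW W M| <= 25%:R * (m * e).
Proof.
move=> hW hM; rewrite /LW.
apply: le_trans (ler_norm_sum _ _ _) _.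
have -> : 25%:R * (m * e) = \sum_(i < 5) \sum_(k < 5) (m * e).
  by rewrite !sum5; ring.
apply: ler_sum => i _; apply: le_trans (ler_norm_sum _ _ _) _.
apply: ler_sum => k _; rewrite normrM; apply: ler_pM => //.
Qed.

Lemma term_bound (w u v d m : R) : `|w| <= m -> 0 <= d ->
  - (m * (u ^+ 2 + d ^+ 2 * v ^+ 2)) <= 2%:R * (d * (w * u * v)).
Proof.
move=> hw hd.
have h1 : `|d * (w * u * v)| <= m * (`|u| * `|d * v|).
  rewrite (_ : d * (w * u * v) = w * (u * (d * v))); last by ring.
  rewrite normrM -(normrM u); apply: ler_wpM2r => //.
have h2 : 2%:R * (`|u| * `|d * v|) <= u ^+ 2 + d ^+ 2 * v ^+ 2.
  have := sqr_ge0 (`|u| - `|d * v|).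
  rewrite -[u ^+ 2]real_normK ?num_real // -[d ^+ 2 * v ^+ 2]exprMn.
  rewrite -[(d * v) ^+ 2]real_normK ?num_real //; nra.
have hm : 0 <= m by apply: le_trans hw.
have /andP[h4 _] : - `|d * (w * u * v)| <= d * (w * u * v) <= `|d * (w * u * v)|.
  by rewrite -ler_norml.
have h5 : 0 <= `|u| * `|d * v| by rewrite mulr_ge0.
nra.
Qed.
End S1.


Section S2.
Variable R : realType.

Definition qp (x0 x1 x2 x3 x4 : R) := x0^+2 + x1^+2 + x2^+2 + x3^+2 + x4^+2
  - 2%:R * (x0*x1 + x1*x2 + x2*x3 + x3*x4 + x4*x0)
  + 2%:R * (x0*x2 + x1*x3 + x2*x4 + x3*x0 + x4*x1).

Lemma growth1 (b0 b1 b2 b3 b4 : R) :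
  0 <= b0 -> 0 <= b1 -> 0 <= b2 -> 0 <= b3 -> 0 <= b4 ->
  b3 <= b4 -> b4 <= b2 -> b3 <= b0 -> b3 <= b1 ->
  (b1 - b0 - b2)^+2 + b3^+2 + b4^+2 <=
  2%:R * ((b0 - b1 + b2 + b3 - b4)^+2 + 4%:R * b1 * b3 + 4%:R * b2 * (b4 - b3)).
Proof. move=> h0 h1 h2 h3 h4 h5 h6 h7 h8.
have e1 : 0 <= (b2 - b4) * (b4 - b3) by apply: mulr_ge0; lra.
have e2 : 0 <= (b1 - b3) * b3 by apply: mulr_ge0; lra.
have e3 : 0 <= b3 * (b4 - b3) by apply: mulr_ge0; lra.
have e4 : 0 <= ((b0 - b1 + b2 + b3 - b4) - (b4 - b3))^+2 by apply: sqr_ge0.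
nra. Qed.

Lemma growth2 (b0 b1 b2 b3 b4 : R) :
  0 <= b0 -> 0 <= b1 -> 0 <= b2 -> 0 <= b3 -> 0 <= b4 ->
  b3 <= b4 -> b4 <= b2 -> b3 <= b0 -> b1 <= b3 -> b3 + b4 <= b0 + b1 -> b3 + b4 <= b1 + b2 ->
  (b1 - b0 - b2)^+2 + b3^+2 + b4^+2 <=
  2%:R * ((b0 - b1 + b2 + b3 - b4)^+2 + 4%:R * b1 * b3 + 4%:R * b2 * (b4 - b3)).
Proof. move=> *. nra. Qed.

Lemma growth_key (x0 x1 x2 x3 x4 : R) :
  0 <= x0 -> 0 <= x1 -> 0 <= x2 -> 0 <= x3 -> 0 <= x4 ->
  x3 <= x4 -> x4 <= x2 -> x3 <= x0 -> x3 + x4 <= x0 + x1 -> x3 + x4 <= x1 + x2 ->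
  (x1 - x0 - x2)^+2 + x3^+2 + x4^+2 <= 2%:R * qp x0 x1 x2 x3 x4.
Proof.
move=> h0 h1 h2 h3 h4 h5 h6 h7 h8 h9.
have -> : qp x0 x1 x2 x3 x4 =
  (x0 - x1 + x2 + x3 - x4)^+2 + 4%:R * x1 * x3 + 4%:R * x2 * (x4 - x3) by rewrite /qp; ring.
have [h|h] := lerP x3 x1.
  exact: growth1.
by apply: growth2 => //; lra.
Qed.

Lemma growth (x0 x1 x2 x3 x4 : R) :
  0 <= x0 -> 0 <= x1 -> 0 <= x2 -> 0 <= x3 -> 0 <= x4 ->
  x3 + x4 <= x0 + x1 -> x3 + x4 <= x1 + x2 -> x3 + x4 <= x2 + x3 -> x3 + x4 <= x4 + x0 ->
  (x1 - x0 - x2)^+2 + x3^+2 + x4^+2 <= 2%:R * qp x0 x1 x2 x3 x4.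
Proof.
move=> h0 h1 h2 h3 h4 h5 h6 h7 h8.
have [h|h] := lerP x3 x4.
  by apply: growth_key => //; lra.
have := @growth_key x2 x1 x0 x4 x3 h2 h1 h0 h4 h3.
have -> : qp x2 x1 x0 x4 x3 = qp x0 x1 x2 x3 x4 by rewrite /qp; ring.
have -> : (x1 - x2 - x0) = (x1 - x0 - x2) by ring.
move=> G; have := G ltac:(lra) ltac:(lra) ltac:(lra) ltac:(lra) ltac:(lra).
lra.
Qed.

Lemma le_eqr (a a' b b' : R) : a' <= b' -> a = a' -> b = b' -> a <= b.
Proof. by move=> h -> ->. Qed.

Definition cone (j : nat) (a c : R) (i : 'I_5) : R :=
  nth 0 (match j with 0 => [:: a; a+c; c; 0; 0] | 1 => [:: 0; a; a+c; c; 0]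
     | 2 => [:: 0; 0; a; a+c; c] | 3 => [:: c; 0; 0; a; a+c]
     | _ => [:: a+c; c; 0; 0; a] end) i.

Definition coneNN (W : 'M[R]_5) :=
  forall j a c, 0 <= a -> 0 <= c -> 0 <= bf W (cone j a c).

Definition nrm (b : 'I_5 -> R) := \sum_(i < 5) b i ^+ 2.

Lemma bf_Horn (b : 'I_5 -> R) : bf (Horn R) b = qp (b o0) (b o1) (b o2) (b o3) (b o4).
Proof. rewrite /bf !sum5 !mxE /= /qp; ring. Qed.

Lemma region (b : 'I_5 -> R) : (forall i, 0 <= b i) ->
  exists j a c, [/\ 0 <= a, 0 <= c,
   nrm (fun i => b i - cone j a c i) <= 2%:R * bf (Horn R) b &
   nrm (cone j a c) <= 3%:R * nrm b].
Proof.
move=> hb; rewrite bf_Horn.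
pose ps (i : 'I_5) := nth 0 [:: b o3 + b o4; b o4 + b o0; b o0 + b o1; b o1 + b o2;
   b o2 + b o3] i.
case: (@arg_minP _ _ _ o0 xpredT ps isT) => j _ Hj.
have h0 := hb o0; have h1 := hb o1; have h2 := hb o2; have h3 := hb o3; have h4 := hb o4.
have q0 := Hj o0 isT; have q1 := Hj o1 isT; have q2 := Hj o2 isT;
have q3 := Hj o3 isT; have q4 := Hj o4 isT.
move: j q0 q1 q2 q3 q4 {Hj}; apply: ord5P; rewrite /ps /= => q0 q1 q2 q3 q4.
- exists 0%N, (b o0), (b o2); split => //; rewrite /nrm !sum5 /cone /=.
    have := @growth (b o0) (b o1) (b o2) (b o3) (b o4) h0 h1 h2 h3 h4.
    move=> G; have {G} := G ltac:(lra) ltac:(lra) ltac:(lra) ltac:(lra).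
    by move=> G; apply: (le_eqr G); rewrite /qp; ring.
  have := sqr_ge0 (b o0 - b o2); have := sqr_ge0 (b o1); have := sqr_ge0 (b o3); have := sqr_ge0 (b o4); nra.
- exists 1%N, (b o1), (b o3); split => //; rewrite /nrm !sum5 /cone /=.
    have := @growth (b o1) (b o2) (b o3) (b o4) (b o0) h1 h2 h3 h4 h0.
    move=> G; have {G} := G ltac:(lra) ltac:(lra) ltac:(lra) ltac:(lra).
    by move=> G; apply: (le_eqr G); rewrite /qp; ring.
  have := sqr_ge0 (b o1 - b o3); have := sqr_ge0 (b o0); have := sqr_ge0 (b o2); have := sqr_ge0 (b o4); nra.
- exists 2%N, (b o2), (b o4); split => //; rewrite /nrm !sum5 /cone /=.
    have := @growth (b o2) (b o3) (b o4) (b o0) (b o1) h2 h3 h4 h0 h1.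
    move=> G; have {G} := G ltac:(lra) ltac:(lra) ltac:(lra) ltac:(lra).
    by move=> G; apply: (le_eqr G); rewrite /qp; ring.
  have := sqr_ge0 (b o2 - b o4); have := sqr_ge0 (b o0); have := sqr_ge0 (b o1); have := sqr_ge0 (b o3); nra.
- exists 3%N, (b o3), (b o0); split => //; rewrite /nrm !sum5 /cone /=.
    have := @growth (b o3) (b o4) (b o0) (b o1) (b o2) h3 h4 h0 h1 h2.
    move=> G; have {G} := G ltac:(lra) ltac:(lra) ltac:(lra) ltac:(lra).
    by move=> G; apply: (le_eqr G); rewrite /qp; ring.
  have := sqr_ge0 (b o3 - b o0); have := sqr_ge0 (b o1); have := sqr_ge0 (b o2); have := sqr_ge0 (b o4); nra.
- exists 4%N, (b o4), (b o1); split => //; rewrite /nrm !sum5 /cone /=.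
    have := @growth (b o4) (b o0) (b o1) (b o2) (b o3) h4 h0 h1 h2 h3.
    move=> G; have {G} := G ltac:(lra) ltac:(lra) ltac:(lra) ltac:(lra).
    by move=> G; apply: (le_eqr G); rewrite /qp; ring.
  have := sqr_ge0 (b o4 - b o1); have := sqr_ge0 (b o0); have := sqr_ge0 (b o2); have := sqr_ge0 (b o3); nra.
Qed.
End S2.


Section S3.
Variable R : realType.
Implicit Types (W M X A : 'M[R]_5).

Lemma bf_split W (b z : 'I_5 -> R) :
  bf W b = bf W z + bil W (fun i => b i - z i) b + bil W z (fun i => b i - z i).
Proof.
rewrite /bf /bil -!big_split; apply: eq_bigr => i _.
rewrite -!big_split; apply: eq_bigr => k _ /=; ring.
Qed.

Lemma bilL W (u v : 'I_5 -> R) (m d : R) : (forall i k, `|W i k| <= m) -> 0 <= d ->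
  - (m * (5%:R * nrm u + 5%:R * (d ^+ 2 * nrm v))) <= 2%:R * (d * bil W u v).
Proof.
move=> hW hd.
have -> : - (m * (5%:R * nrm u + 5%:R * (d ^+ 2 * nrm v))) =
  \sum_(i < 5) \sum_(k < 5) - (m * (u i ^+ 2 + d ^+ 2 * v k ^+ 2)).
  rewrite /nrm !sum5; ring.
rewrite /bil !mulr_sumr; apply: ler_sum => i _; rewrite !mulr_sumr; apply: ler_sum => k _.
exact: term_bound.
Qed.

Lemma bilR W (u v : 'I_5 -> R) (m d : R) : (forall i k, `|W i k| <= m) -> 0 <= d ->
  - (m * (5%:R * nrm v + 5%:R * (d ^+ 2 * nrm u))) <= 2%:R * (d * bil W u v).
Proof.
move=> hW hd.
have -> : - (m * (5%:R * nrm v + 5%:R * (d ^+ 2 * nrm u))) =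
  \sum_(i < 5) \sum_(k < 5) - (m * (v k ^+ 2 + d ^+ 2 * u i ^+ 2)).
  rewrite /nrm !sum5; ring.
rewrite /bil !mulr_sumr; apply: ler_sum => i _; rewrite !mulr_sumr; apply: ler_sum => k _.
rewrite (_ : W i k * u i * v k = W i k * v k * u i); last by ring.
exact: term_bound.
Qed.

Lemma perb W (m d : R) (b : 'I_5 -> R) : (forall i k, `|W i k| <= m) -> coneNN W ->
  0 <= d -> (forall i, 0 <= b i) ->
  - (10%:R * m) * (bf (Horn R) b + d ^+ 2 * nrm b) <= d * bf W b.
Proof.
move=> hW hc hd hb.
have hm : 0 <= m by apply: le_trans (hW o0 o0).
have [j [a [c [ha hc' hw hz]]]] := region hb.
set z := cone j a c in hw hz.
have h0 : 0 <= d * bf W z by apply: mulr_ge0 => //; exact: hc.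
rewrite (bf_split W b z) [X in _ <= X]mulrDr [X in _ <= X + _]mulrDr.
have h1 := bilL (fun i => b i - z i) b hW hd.
have h2 := bilR z (fun i => b i - z i) hW hd.
set w := (fun i => b i - z i) in h1 h2 hw.
have hq : 0 <= bf (Horn R) b.
  have : 0 <= nrm w by rewrite /nrm; apply: sumr_ge0 => i _; exact: sqr_ge0.
  lra.
have hN : 0 <= nrm b by rewrite /nrm; apply: sumr_ge0 => i _; exact: sqr_ge0.
have hd2 : 0 <= d ^+ 2 by exact: sqr_ge0.
have e1 : m * nrm w <= m * (2%:R * bf (Horn R) b) by apply: ler_wpM2l.
have e2 : m * (d ^+ 2 * nrm z) <= m * (d ^+ 2 * (3%:R * nrm b)).
  by apply: ler_wpM2l => //; apply: ler_wpM2l.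
set q := bf (Horn R) b in hq e1 *; set N := nrm b in hN e2 *.
set Z := nrm z in h2 e2; set w1 := nrm w in h1 h2 e1.
set B0 := d * bf W z in h0 *.
set B1 := d * bil W w b in h1 *; set B2 := d * bil W z w in h2 *.
have E1 : m * (5%:R * w1 + 5%:R * (d ^+ 2 * N)) = 5%:R * (m * w1) + 5%:R * (m * (d ^+ 2 * N)) by ring.
have E2 : m * (5%:R * w1 + 5%:R * (d ^+ 2 * Z)) = 5%:R * (m * w1) + 5%:R * (m * (d ^+ 2 * Z)) by ring.
have E3 : - (10%:R * m) * (q + d ^+ 2 * N) = - (10%:R * (m * q)) - 10%:R * (m * (d ^+ 2 * N)) by ring.
have E4 : m * (2%:R * q) = 2%:R * (m * q) by ring.
have E5 : m * (d ^+ 2 * (3%:R * N)) = 3%:R * (m * (d ^+ 2 * N)) by ring.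
rewrite E3; rewrite E1 in h1; rewrite E2 in h2; rewrite E4 in e1; rewrite E5 in e2.
lra.
Qed.

Lemma bf_id (b : 'I_5 -> R) : bf 1%:M b = nrm b.
Proof. rewrite /bf /nrm !sum5 !mxE /=; ring. Qed.

Lemma CP_bound W (m d : R) X : (forall i k, `|W i k| <= m) -> coneNN W -> 0 <= d ->
  CP5 X -> - (10%:R * m) * (LW (Horn R) X + d ^+ 2 * LW 1%:M X) <= d * LW W X.
Proof.
move=> hW hc hd [k [B [hB ->]]].
rewrite !LW_CP mulr_sumr mulr_sumr -big_split mulr_sumr /=.
apply: ler_sum => l _; rewrite bf_id; exact: perb.
Qed.

Lemma lim0 (x K : R) : (forall e, 0 < e -> - (K * e) <= x) -> 0 <= x.
Proof.
move=> h; rewrite leNgt; apply/negP => hx.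
have hK : 0 < `|K| + 1 by have := normr_ge0 K; lra.
pose e := - x / (`|K| + 1).
have he : 0 < e by rewrite /e; apply: divr_gt0 => //; lra.
have hee : e * (`|K| + 1) = - x by rewrite /e divfK // lt0r_neq0.
have := h e he.
have : K * e <= `|K| * e by apply: ler_wpM2r; [lra | exact: ler_norm].
nra.
Qed.

Lemma frobE M N : frob M N = LW N M.
Proof.
rewrite /frob /LW /mxtrace.
transitivity (\sum_(i < 5) \sum_(k < 5) M k i * N k i).
  by apply: eq_bigr => i _; rewrite !mxE; apply: eq_bigr => k _; rewrite mxE.
by rewrite exchange_big; apply: eq_bigr => i _; apply: eq_bigr => k _; rewrite mulrC.
Qed.

Lemma entry_fnorm M i k : `|M i k| <= fnorm M.
Proof.
rewrite /fnorm -sqrtr_sqr; apply: ler_wsqrtr.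
rewrite frobE /LW (bigD1 i) //= (bigD1 k) //=.
have h1 : 0 <= \sum_(j < 5 | j != k) M i j * M i j.
  by apply: sumr_ge0 => j _; rewrite -expr2; exact: sqr_ge0.
have h2 : 0 <= \sum_(j < 5 | j != i) \sum_(l < 5) M j l * M j l.
  by apply: sumr_ge0 => j _; apply: sumr_ge0 => l _; rewrite -expr2; exact: sqr_ge0.
rewrite expr2; lra.
Qed.
End S3.


Section S4.
Variable R : realType.
Implicit Types (W M X A : 'M[R]_5).

Lemma Horn_bound i k : `|Horn R i k| <= 1.
Proof. by elim/ord5P: i; elim/ord5P: k; rewrite mxE /= ?normrN normr1. Qed.

Lemma Id_bound i k : `|(1%:M : 'M[R]_5) i k| <= 1.
Proof. by rewrite mxE; case: (i == k); rewrite ?normr1 ?normr0. Qed.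

Lemma lim_W A W (m : R) : (forall i k, `|W i k| <= m) -> coneNN W ->
  closure5 (@CP5 R) A -> LW (Horn R) A = 0 -> 0 <= LW W A.
Proof.
move=> hW hc [hsym hcl] hH.
have hm : 0 <= m by apply: le_trans (hW o0 o0).
set tA := LW 1%:M A; set x := LW W A.
have step : forall d, 0 < d -> 0 <= d * x + 10%:R * m * (d ^+ 2 * tA).
  move=> d hd.
  apply: (@lim0 _ _ (250%:R * m + 250%:R * m * d ^+ 2 + 25%:R * m * d)) => e he.
  have [X [hXs [hX hXA]]] := hcl e he.
  have hE : forall i k, `|(X - A) i k| <= e.
    by move=> i k; apply: le_trans (entry_fnorm _ _ _) (ltW hXA).
  have b1 := LW_bound Horn_bound hE.
  have b2 := LW_bound Id_bound hE.
  have b3 := LW_bound hW hE.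
  rewrite !LW_sub in b1 b2 b3; rewrite hH in b1.
  have hcp := CP_bound hW hc (ltW hd) hX.
  move: b1 b2 b3 hcp; rewrite -/tA -/x.
  set h := LW (Horn R) X; set i1 := LW 1%:M X; set y := LW W X.
  move=> b1 b2 b3 hcp.
  have c1 : h <= 25%:R * (1 * e) by move: b1; rewrite subr0 => /ler_normlP [].
  have c2 : i1 <= tA + 25%:R * (1 * e).
    by move: b2 => /ler_normlP [] _ ?; lra.
  have c3 : y <= x + 25%:R * (m * e).
    by move: b3 => /ler_normlP [] _ ?; lra.
  have hd2 : 0 <= d ^+ 2 by exact: sqr_ge0.
  have p1 : m * h <= m * (25%:R * (1 * e)) by apply: ler_wpM2l.
  have p2 : m * (d ^+ 2 * i1) <= m * (d ^+ 2 * (tA + 25%:R * (1 * e))).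
    by apply: ler_wpM2l => //; apply: ler_wpM2l.
  have p3 : d * y <= d * (x + 25%:R * (m * e)) by apply: ler_wpM2l => //; exact: ltW.
  nra.
apply: (@lim0 _ x (10%:R * m * tA)) => d hd.
have := step d hd.
have -> : d * x + 10%:R * m * (d ^+ 2 * tA) = d * (x + 10%:R * m * tA * d) by ring.
rewrite pmulr_rge0 //; lra.
Qed.
End S4.


Section S5.
Variable R : realType.
Implicit Types (W M X A : 'M[R]_5).

Definition WE (j : 'I_5) : 'M[R]_5 := \matrix_(i, k) (Horn R i k * (i == j)%:R).

Lemma bf_opp W b : bf (- W) b = - bf W b.
Proof. rewrite /bf -sumrN; apply: eq_bigr => i _; rewrite -sumrN; apply: eq_bigr => k _; rewrite !mxE; ring. Qed.

Lemma LW_opp W M : LW (- W) M = - LW W M.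
Proof. rewrite /LW -sumrN; apply: eq_bigr => i _; rewrite -sumrN; apply: eq_bigr => k _; rewrite !mxE; ring. Qed.

Lemma WE_cone j n a c : bf (WE j) (cone n a c) = 0.
Proof.
elim/ord5P: j; case: n => [|[|[|[|n]]]]; rewrite /bf !sum5 !mxE /cone /=; ring.
Qed.

Lemma WE_bound j i k : `|WE j i k| <= 1.
Proof.
rewrite mxE normrM; case: (i == j); rewrite ?normr1 ?normr0 ?mulr1 ?mulr0 //.
exact: Horn_bound.
Qed.

Lemma WE_zero A j : closure5 (@CP5 R) A -> LW (Horn R) A = 0 -> LW (WE j) A = 0.
Proof.
move=> hc hH; apply/eqP; rewrite eq_le; apply/andP; split.
  rewrite -oppr_ge0 -LW_opp; apply: (lim_W (m := 1)) => //.
    by move=> i k; rewrite mxE normrN; exact: WE_bound.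
  by move=> n a c _ _; rewrite bf_opp WE_cone oppr0.
apply: (lim_W (m := 1)) => //; first exact: WE_bound.
by move=> n a c _ _; rewrite WE_cone.
Qed.

Definition wse (s0 s1 s2 s3 s4 : R) (i k : nat) : R :=
  match i, k with
  | 0, 1 => s0 ^+ 2 | 1, 2 => s1 ^+ 2 | 2, 3 => s2 ^+ 2 | 3, 4 => s3 ^+ 2 | 4, 0 => s4 ^+ 2
  | 0, 2 => - (s0 + s1) ^+ 2 | 1, 3 => - (s1 + s2) ^+ 2 | 2, 4 => - (s2 + s3) ^+ 2
  | 3, 0 => - (s3 + s4) ^+ 2 | 4, 1 => - (s4 + s0) ^+ 2
  | _, _ => 0
  end.

Definition Ws s0 s1 s2 s3 s4 : 'M[R]_5 := \matrix_(i, k) wse s0 s1 s2 s3 s4 i k.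

Lemma Ws_cone s0 s1 s2 s3 s4 : coneNN (Ws s0 s1 s2 s3 s4).
Proof.
move=> n a c _ _.
case: n => [|[|[|[|n]]]]; rewrite /bf !sum5 !mxE /cone /=.
- by apply: (le_eqr (sqr_ge0 (a * s0 - c * s1))) => //; ring.
- by apply: (le_eqr (sqr_ge0 (a * s1 - c * s2))) => //; ring.
- by apply: (le_eqr (sqr_ge0 (a * s2 - c * s3))) => //; ring.
- by apply: (le_eqr (sqr_ge0 (a * s3 - c * s4))) => //; ring.
- by apply: (le_eqr (sqr_ge0 (a * s4 - c * s0))) => //; ring.
Qed.

Lemma Ws_bound s0 s1 s2 s3 s4 i k :
  `|Ws s0 s1 s2 s3 s4 i k| <= 2%:R * (s0^+2 + s1^+2 + s2^+2 + s3^+2 + s4^+2).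
Proof.
have := sqr_ge0 s0; have := sqr_ge0 s1; have := sqr_ge0 s2; have := sqr_ge0 s3;
have := sqr_ge0 s4.
have := sqr_ge0 (s0 - s1); have := sqr_ge0 (s1 - s2); have := sqr_ge0 (s2 - s3);
have := sqr_ge0 (s3 - s4); have := sqr_ge0 (s4 - s0).
elim/ord5P: i; elim/ord5P: k; rewrite mxE /=; try rewrite normrN; try rewrite normr0;
  try rewrite ger0_norm; first [exact: sqr_ge0 | nra].
Qed.

Definition Qf (A : 'M[R]_5) (s0 s1 s2 s3 s4 : R) :=
  s0 ^+ 2 * A o0 o1 + s1 ^+ 2 * A o1 o2 + s2 ^+ 2 * A o2 o3 + s3 ^+ 2 * A o3 o4
  + s4 ^+ 2 * A o4 o0
  - (s0 + s1) ^+ 2 * A o0 o2 - (s1 + s2) ^+ 2 * A o1 o3 - (s2 + s3) ^+ 2 * A o2 o4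
  - (s3 + s4) ^+ 2 * A o3 o0 - (s4 + s0) ^+ 2 * A o4 o1.

Lemma Q_nonneg A s0 s1 s2 s3 s4 : closure5 (@CP5 R) A -> LW (Horn R) A = 0 ->
  0 <= Qf A s0 s1 s2 s3 s4.
Proof.
move=> hc hH.
have := lim_W (@Ws_bound s0 s1 s2 s3 s4) (@Ws_cone s0 s1 s2 s3 s4) hc hH.
suff -> : LW (Ws s0 s1 s2 s3 s4) A = Qf A s0 s1 s2 s3 s4 by [].
rewrite /LW !sum5 !mxE /= /Qf; ring.
Qed.
End S5.


Section S6.
Variable R : realType.
Variables c0 c1 c2 c3 c4 d0 d1 d2 d3 d4 : R.

Definition Qc (s0 s1 s2 s3 s4 : R) :=
  c0 * s0 ^+ 2 + c1 * s1 ^+ 2 + c2 * s2 ^+ 2 + c3 * s3 ^+ 2 + c4 * s4 ^+ 2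
  - 2%:R * (d0 * s0 * s1 + d1 * s1 * s2 + d2 * s2 * s3 + d3 * s3 * s4 + d4 * s4 * s0).

Hypothesis hd0 : 0 < d0.
Hypothesis hd1 : 0 < d1.
Hypothesis hd2 : 0 < d2.
Hypothesis hd3 : 0 < d3.
Hypothesis hd4 : 0 < d4.
Hypothesis hQ : forall s0 s1 s2 s3 s4, 0 <= Qc s0 s1 s2 s3 s4.

Lemma neg_test (P C c lam : R) : P <= 0 -> 0 < C -> 0 <= c -> lam * C = c + 1 ->
  lam ^+ 2 * P - 2%:R * lam * C + c < 0.
Proof.
move=> hP hC hc hl.
have : lam ^+ 2 * P <= 0 by apply: mulr_ge0_le0 => //; exact: sqr_ge0.
have -> : 2%:R * lam * C = 2%:R * (lam * C) by ring.
rewrite hl; lra.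
Qed.

Definition a1 := c1.
Definition a2 := c2 * c1 - d1 ^+ 2.
Definition a3 := c3 * a2 - d2 ^+ 2 * a1.
Definition a4 := c4 * a3 - d3 ^+ 2 * a2.

Lemma c_ge0 : [/\ 0 <= c0, 0 <= c1, 0 <= c2, 0 <= c3 & 0 <= c4].
Proof.
split.
- by have := hQ 1 0 0 0 0; rewrite /Qc; lra.
- by have := hQ 0 1 0 0 0; rewrite /Qc; lra.
- by have := hQ 0 0 1 0 0; rewrite /Qc; lra.
- by have := hQ 0 0 0 1 0; rewrite /Qc; lra.
- by have := hQ 0 0 0 0 1; rewrite /Qc; lra.
Qed.

Lemma lam_ex (C c : R) : 0 < C -> exists lam, lam * C = c + 1.
Proof. by move=> hC; exists ((c + 1) / C); rewrite divfK // lt0r_neq0. Qed.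

Lemma a_pos : [/\ 0 < a1, 0 < a2, 0 < a3 & 0 < a4].
Proof.
have [g0 g1 g2 g3 g4] := c_ge0.
have A1 : 0 < a1.
  rewrite ltNge; apply/negP => h.
  have [lam hl] := lam_ex c2 hd1.
  have := hQ 0 lam 1 0 0.
  have -> : Qc 0 lam 1 0 0 = lam ^+ 2 * a1 - 2%:R * lam * d1 + c2 by rewrite /Qc /a1; ring.
  by move/(le_lt_trans)=> H; have := H _ (neg_test h hd1 g2 hl); rewrite ltxx.
have A2 : 0 < a2.
  rewrite ltNge; apply/negP => h.
  have hC : 0 < d2 * a1 by apply: mulr_gt0.
  have [lam hl] := lam_ex c3 hC.
  have := hQ 0 (lam * d1) (lam * a1) 1 0.
  have -> : Qc 0 (lam * d1) (lam * a1) 1 0 = lam ^+ 2 * (a1 * a2) - 2%:R * lam * (d2 * a1) + c3.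
    by rewrite /Qc /a2 /a1; ring.
  have hP : a1 * a2 <= 0 by apply: mulr_ge0_le0 => //; exact: ltW.
  by move/(le_lt_trans)=> H; have := H _ (neg_test hP hC g3 hl); rewrite ltxx.
have A3 : 0 < a3.
  rewrite ltNge; apply/negP => h.
  have hC : 0 < d3 * a2 by apply: mulr_gt0.
  have [lam hl] := lam_ex c4 hC.
  have := hQ 0 (lam * (d1 * d2)) (lam * (d2 * a1)) (lam * a2) 1.
  have -> : Qc 0 (lam * (d1 * d2)) (lam * (d2 * a1)) (lam * a2) 1
     = lam ^+ 2 * (a2 * a3) - 2%:R * lam * (d3 * a2) + c4.
    by rewrite /Qc /a3 /a2 /a1; ring.
  have hP : a2 * a3 <= 0 by apply: mulr_ge0_le0 => //; exact: ltW.
  by move/(le_lt_trans)=> H; have := H _ (neg_test hP hC g4 hl); rewrite ltxx.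
have A4 : 0 < a4.
  rewrite ltNge; apply/negP => h.
  have hC : 0 < d4 * a3 + d0 * (d1 * d2 * d3).
    by apply: addr_gt0; apply: mulr_gt0 => //; do 2 apply: mulr_gt0 => //.
  have [lam hl] := lam_ex c0 hC.
  have := hQ 1 (lam * (d1 * d2 * d3)) (lam * (d2 * d3 * a1)) (lam * (d3 * a2)) (lam * a3).
  have -> : Qc 1 (lam * (d1 * d2 * d3)) (lam * (d2 * d3 * a1)) (lam * (d3 * a2)) (lam * a3)
     = lam ^+ 2 * (a3 * a4) - 2%:R * lam * (d4 * a3 + d0 * (d1 * d2 * d3)) + c0.
    by rewrite /Qc /a4 /a3 /a2 /a1; ring.
  have hP : a3 * a4 <= 0 by apply: mulr_ge0_le0 => //; exact: ltW.
  by move/(le_lt_trans)=> H; have := H _ (neg_test hP hC g0 hl); rewrite ltxx.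
by [].
Qed.

Lemma rel_aux (c x y z e : R) : y != 0 -> z != 0 -> c * y = x + e * z ->
  c * (y / z) = x / y * (y / z) + e.
Proof.
move=> hy hz h. rewrite (_ : c * (y / z) = (c * y) / z); last by rewrite mulrA.
by rewrite h; field; rewrite hz hy.
Qed.

Definition p1 t := c1 * t - d0 ^+ 2.
Definition p2 t := c2 * p1 t - d1 ^+ 2 * t.
Definition p3 t := c3 * p2 t - d2 ^+ 2 * p1 t.
Definition p4 t := c4 * p3 t - d3 ^+ 2 * p2 t.
Definition Phi t := (c0 - t) * p4 t - d4 ^+ 2 * p3 t.

Lemma sol : exists w0 w1 w2 w3 w4 : R,
  [/\ 0 < w0, 0 < w1, 0 < w2, 0 < w3 & 0 < w4] /\
  [/\ c1 * w0 = w1 * w0 + d0 ^+ 2, c2 * w1 = w2 * w1 + d1 ^+ 2,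
      c3 * w2 = w3 * w2 + d2 ^+ 2, c4 * w3 = w4 * w3 + d3 ^+ 2
    & c0 * w4 = w0 * w4 + d4 ^+ 2].
Proof.
have [A1 A2 A3 A4] := a_pos.
have L1 t : p1 t = p1 0 + a1 * t by rewrite /p1 /a1; ring.
have L2 t : p2 t = p2 0 + a2 * t by rewrite /p2 /p1 /a2; ring.
have L3 t : p3 t = p3 0 + a3 * t by rewrite /p3 /p2 /p1 /a3 /a2 /a1; ring.
have L4 t : p4 t = p4 0 + a4 * t by rewrite /p4 /p3 /p2 /p1 /a4 /a3 /a2 /a1; ring.
have W1 t : 1 * p1 t - a1 * t = - d0 ^+ 2 by rewrite /p1 /a1; ring.
have W2 t : a1 * p2 t - a2 * p1 t = - (d0 * d1) ^+ 2 by rewrite /p2 /p1 /a2 /a1; ring.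
have W3 t : a2 * p3 t - a3 * p2 t = - (d0 * d1 * d2) ^+ 2
  by rewrite /p3 /p2 /p1 /a3 /a2 /a1; ring.
have W4 t : a3 * p4 t - a4 * p3 t = - (d0 * d1 * d2 * d3) ^+ 2
  by rewrite /p4 /p3 /p2 /p1 /a4 /a3 /a2 /a1; ring.
have pos t : 0 < p4 t -> [/\ 0 < t, 0 < p1 t, 0 < p2 t & 0 < p3 t].
  move=> h4.
  have h3 : 0 < p3 t.
    have := W4 t; have := sqr_ge0 (d0 * d1 * d2 * d3).
    have : 0 < a3 * p4 t by apply: mulr_gt0.
    move=> ? ? ?; rewrite -(pmulr_rgt0 _ A4); lra.
  have h2 : 0 < p2 t.
    have := W3 t; have := sqr_ge0 (d0 * d1 * d2).
    have : 0 < a2 * p3 t by apply: mulr_gt0.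
    move=> ? ? ?; rewrite -(pmulr_rgt0 _ A3); lra.
  have h1 : 0 < p1 t.
    have := W2 t; have := sqr_ge0 (d0 * d1).
    have : 0 < a1 * p2 t by apply: mulr_gt0.
    move=> ? ? ?; rewrite -(pmulr_rgt0 _ A2); lra.
  have h0 : 0 < t.
    have := W1 t; have := sqr_ge0 d0.
    move=> ? ?; rewrite -(pmulr_rgt0 _ A1); lra.
  by [].
pose D := d0 * d1 * d2 * d3 * d4.
have hD : 0 < D by rewrite /D; do 4 apply: mulr_gt0 => //.
pose t1 := (D - p4 0) / a4.
have ht1 : p4 t1 = D by rewrite L4 /t1 mulrC divfK ?lt0r_neq0 //; ring.
have [q0 q1 q2 q3] := pos t1 ltac:(by rewrite ht1).
have Sig t : Qc (p4 t) (d1 * d2 * d3 * d4 * t) (d2 * d3 * d4 * p1 t) (d3 * d4 * p2 t)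
   (d4 * p3 t) = t * (p4 t - D) ^+ 2 + p4 t * Phi t.
  by rewrite /Qc /Phi /p4 /p3 /p2 /p1 /D; ring.
have Phi1 : 0 <= Phi t1.
  have := hQ (p4 t1) (d1 * d2 * d3 * d4 * t1) (d2 * d3 * d4 * p1 t1) (d3 * d4 * p2 t1)
   (d4 * p3 t1).
  by rewrite Sig ht1 subrr expr0n /= mulr0 add0r pmulr_rge0.
pose B := c0 * a4 - p4 0 - d4 ^+ 2 * a3.
pose C0 := c0 * p4 0 - d4 ^+ 2 * p3 0.
have PhiE t : Phi t = - a4 * t ^+ 2 + B * t + C0.
  by rewrite /Phi (L4 t) (L3 t) /B /C0; ring.
pose Dl := B ^+ 2 + 4%:R * a4 * C0.
pose u := 2%:R * a4 * t1 - B.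
have hu : u ^+ 2 - Dl = - 4%:R * a4 * Phi t1 by rewrite PhiE /u /Dl; ring.
have hDl : u ^+ 2 <= Dl.
  have : 0 <= 4%:R * a4 * Phi t1 by apply: mulr_ge0 => //; apply: mulr_ge0 => //; exact: ltW.
  lra.
have hDl0 : 0 <= Dl by apply: le_trans hDl; exact: sqr_ge0.
pose r := Num.sqrt Dl.
have hr2 : r ^+ 2 = Dl by rewrite /r sqr_sqrtr.
have hur : u <= r.
  apply: le_trans (ler_norm u) _; rewrite -sqrtr_sqr /r; exact: ler_wsqrtr.
pose ts := (B + r) / (2%:R * a4).
have h2a : 0 < 2%:R * a4 by apply: mulr_gt0.
have hts : 2%:R * a4 * ts = B + r by rewrite /ts mulrC divfK // lt0r_neq0.
have tst1 : t1 <= ts.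
  rewrite -(ler_pM2l h2a) hts; rewrite /u in hur; lra.
have Phis : Phi ts = 0.
  have nz : 2%:R * a4 * (2%:R * a4) != 0 by exact: lt0r_neq0 (mulr_gt0 h2a h2a).
  suff H : 2%:R * a4 * (2%:R * a4) * Phi ts = 0.
    by move/eqP: H; rewrite mulf_eq0 (negbTE nz) /= => /eqP.
  have -> : 2%:R * a4 * (2%:R * a4) * Phi ts =
     - a4 * (2%:R * a4 * ts) ^+ 2 + 2%:R * a4 * B * (2%:R * a4 * ts) + 4%:R * a4 ^+ 2 * C0.
    by rewrite PhiE; ring.
  rewrite hts.
  have -> : - a4 * (B + r) ^+ 2 + 2%:R * a4 * B * (B + r) + 4%:R * a4 ^+ 2 * C0
     = a4 * (Dl - r ^+ 2) by rewrite /Dl; ring.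
  by rewrite hr2 subrr mulr0.
have gt t : t1 <= t -> [/\ 0 < t, 0 < p1 t, 0 < p2 t, 0 < p3 t & 0 < p4 t].
  move=> ht.
  have k : forall (a x y : R), 0 < a -> 0 < x -> x <= y -> 0 < y.
    by move=> a x y _ hx hxy; apply: lt_le_trans hxy.
  have e0 : 0 <= t - t1 by lra.
  split.
  - lra.
  - have := L1 t; have := L1 t1; have : a1 * t1 <= a1 * t by apply: ler_wpM2l => //; exact: ltW.
    lra.
  - have := L2 t; have := L2 t1; have : a2 * t1 <= a2 * t by apply: ler_wpM2l => //; exact: ltW.
    lra.
  - have := L3 t; have := L3 t1; have : a3 * t1 <= a3 * t by apply: ler_wpM2l => //; exact: ltW.
    lra.
  - have q4 : 0 < p4 t1 by rewrite ht1.
    have := L4 t; have := L4 t1; have : a4 * t1 <= a4 * t by apply: ler_wpM2l => //; exact: ltW.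
    lra.
have [g0 g1 g2 g3 g4] := gt ts tst1.
exists ts, (p1 ts / ts), (p2 ts / p1 ts), (p3 ts / p2 ts), (p4 ts / p3 ts).
split; first by split => //; apply: divr_gt0.
have n0 := lt0r_neq0 g0; have n1 := lt0r_neq0 g1; have n2 := lt0r_neq0 g2;
have n3 := lt0r_neq0 g3; have n4 := lt0r_neq0 g4.
split.
- by rewrite divfK // /p1; ring.
- by apply: rel_aux => //; rewrite /p2; ring.
- by apply: rel_aux => //; rewrite /p3; ring.
- by apply: rel_aux => //; rewrite /p4; ring.
- have H : c0 * p4 ts = ts * p4 ts + d4 ^+ 2 * p3 ts.
    by apply/eqP; rewrite -subr_eq0; apply/eqP; rewrite -Phis /Phi; ring.
  rewrite mulrA H mulrA; field; by rewrite n3.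
Qed.
End S6.

Section S7.
Variable R : realType.

Definition Mik (i k : 'I_5) : 'M[R]_5 :=
  \matrix_(a, b) (((a == i) && (b == k)) || ((a == k) && (b == i)))%:R.

Lemma LW_Mik (i k : 'I_5) (c : R) : i != k ->
  LW (- (c *: Mik i k)) (- (c *: Mik i k)) = 2%:R * c ^+ 2.
Proof.
elim/ord5P: i; elim/ord5P: k => //= _; rewrite /LW !sum5 !mxE /=; ring.
Qed.

Lemma pos_entry (A : 'M[R]_5) (i k : 'I_5) : symmetric5 A -> interior5 (@DNN5 R) A ->
  i != k -> 0 < A i k.
Proof.
move=> hs [_ [e [he hX]]] hik.
pose X := A - (e / 2%:R) *: Mik i k.
have hXs : symmetric5 X.
  have hsym a b : A b a = A a b by rewrite -{2}hs mxE.
  rewrite /symmetric5 /X; apply/matrixP => a b; rewrite !mxE hsym.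
  by rewrite orbC (andbC (b == k)) (andbC (b == i)).
have hfn : fnorm (X - A) < e.
  have -> : X - A = - ((e / 2%:R) *: Mik i k) by rewrite /X addrAC subrr add0r.
  rewrite /fnorm frobE.
  rewrite LW_Mik // (_ : 2%:R * (e / 2%:R) ^+ 2 = e ^+ 2 / 2%:R); last by field.
  have hs2 : Num.sqrt (e ^+ 2) = e by rewrite sqrtr_sqr ger0_norm // ltW.
  rewrite -[X in _ < X]hs2 ltr_sqrt ?exprn_gt0 //.
  have : 0 < e ^+ 2 by apply: exprn_gt0.
  move=> h; rewrite ltr_pdivrMr ?ltr0n //. lra.
have [_ hnn] := hX X hXs hfn.
have := hnn i k; rewrite /X !mxE !eqxx /= mulr1.
have : 0 < e / 2%:R by apply: divr_gt0.
lra.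
Qed.
End S7.


Lemma BBt (R : realType) (y1 y2 y3 y4 y5 z1 z2 z3 z4 z5 : R) :
  let B := Ymat y1 y2 y3 y4 y5 *m diag5 z1 z2 z3 z4 z5 in
  B *m B^T = Ymat y1 y2 y3 y4 y5 *m diag5 (z1 ^+ 2) (z2 ^+ 2) (z3 ^+ 2) (z4 ^+ 2) (z5 ^+ 2)
     *m (Ymat y1 y2 y3 y4 y5)^T.
Proof.
move=> B; rewrite /B trmx_mul /diag5 tr_diag_mx !mulmxA -[_ *m diag_mx _ *m diag_mx _]mulmxA.
congr (_ *m _ *m _); apply/matrixP => a b; rewrite !mxE sum5 !mxE.
by elim/ord5P: a; elim/ord5P: b; rewrite /= ?mulr0n ?mulr1n; ring.
Qed.

Theorem lemma2p4 (R : realType) (A : 'M[R]_5) :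
  symmetric5 A ->
  frob A (Horn R) = 0 ->
  boundary5 (@CP5 R) A ->
  interior5 (@DNN5 R) A ->
  exists y1 y2 y3 y4 y5 z1 z2 z3 z4 z5 : R,
    [/\ 0 < y1, 0 < y2, 0 < y3, 0 < y4 & 0 < y5] /\
    [/\ 0 < z1, 0 < z2, 0 < z3, 0 < z4 & 0 < z5] /\
    let B := Ymat y1 y2 y3 y4 y5 *m diag5 z1 z2 z3 z4 z5 in
    A = B *m B^T.
Proof.
move=> hs hF [hcl _] hint.
have hH : LW (Horn R) A = 0 by rewrite -frobE.
have hsym a b : A b a = A a b by rewrite -{2}hs mxE.
have E0 := WE_zero o0 hcl hH; have E1 := WE_zero o1 hcl hH; have E2 := WE_zero o2 hcl hH;
have E3 := WE_zero o3 hcl hH; have E4 := WE_zero o4 hcl hH.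
move: E0 E1 E2 E3 E4; rewrite /LW !sum5 !mxE /=.
rewrite !(mul0r, mulr0, mul1r, mulr1, addr0, add0r) => E0 E1 E2 E3 E4.
have hd0 : 0 < A o0 o2 by apply: pos_entry.
have hd1 : 0 < A o1 o3 by apply: pos_entry.
have hd2 : 0 < A o2 o4 by apply: pos_entry.
have hd3 : 0 < A o3 o0 by apply: pos_entry.
have hd4 : 0 < A o4 o1 by apply: pos_entry.
have hQ : forall s0 s1 s2 s3 s4, 0 <= Qc (A o0 o1 - A o0 o2 - A o4 o1)
   (A o1 o2 - A o1 o3 - A o0 o2) (A o2 o3 - A o2 o4 - A o1 o3)
   (A o3 o4 - A o3 o0 - A o2 o4) (A o4 o0 - A o4 o1 - A o3 o0)
   (A o0 o2) (A o1 o3) (A o2 o4) (A o3 o0) (A o4 o1) s0 s1 s2 s3 s4.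
  move=> s0 s1 s2 s3 s4; have := Q_nonneg s0 s1 s2 s3 s4 hcl hH.
  suff -> : Qf A s0 s1 s2 s3 s4 = Qc (A o0 o1 - A o0 o2 - A o4 o1)
   (A o1 o2 - A o1 o3 - A o0 o2) (A o2 o3 - A o2 o4 - A o1 o3)
   (A o3 o4 - A o3 o0 - A o2 o4) (A o4 o0 - A o4 o1 - A o3 o0)
   (A o0 o2) (A o1 o3) (A o2 o4) (A o3 o0) (A o4 o1) s0 s1 s2 s3 s4 by [].
  by rewrite /Qf /Qc; ring.
have [w0 [w1 [w2 [w3 [w4 [[g0 g1 g2 g3 g4] [r1 r2 r3 r4 r0]]]]]]] :=
  sol hd0 hd1 hd2 hd3 hd4 hQ.
exists (A o0 o2 / w0), (A o1 o3 / w1), (A o2 o4 / w2), (A o3 o0 / w3), (A o4 o1 / w4).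
exists (Num.sqrt w0), (Num.sqrt w1), (Num.sqrt w2), (Num.sqrt w3), (Num.sqrt w4).
split; first by split; apply: divr_gt0.
split; first by split; rewrite sqrtr_gt0.
rewrite BBt !sqr_sqrtr ?ltW //.
set y1 := A o0 o2 / w0; set y2 := A o1 o3 / w1; set y3 := A o2 o4 / w2;
set y4 := A o3 o0 / w3; set y5 := A o4 o1 / w4.
have k1 : A o0 o2 = w0 * y1 by rewrite /y1 mulrC divfK // lt0r_neq0.
have k2 : A o1 o3 = w1 * y2 by rewrite /y2 mulrC divfK // lt0r_neq0.
have k3 : A o2 o4 = w2 * y3 by rewrite /y3 mulrC divfK // lt0r_neq0.
have k4 : A o3 o0 = w3 * y4 by rewrite /y4 mulrC divfK // lt0r_neq0.
have k5 : A o4 o1 = w4 * y5 by rewrite /y5 mulrC divfK // lt0r_neq0.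
have c1 : A o1 o2 - A o1 o3 - A o0 o2 = w1 + w0 * y1 ^+ 2.
  by apply: (mulIf (lt0r_neq0 g0)); rewrite r1 k1; ring.
have c2 : A o2 o3 - A o2 o4 - A o1 o3 = w2 + w1 * y2 ^+ 2.
  by apply: (mulIf (lt0r_neq0 g1)); rewrite r2 k2; ring.
have c3 : A o3 o4 - A o3 o0 - A o2 o4 = w3 + w2 * y3 ^+ 2.
  by apply: (mulIf (lt0r_neq0 g2)); rewrite r3 k3; ring.
have c4 : A o4 o0 - A o4 o1 - A o3 o0 = w4 + w3 * y4 ^+ 2.
  by apply: (mulIf (lt0r_neq0 g3)); rewrite r4 k4; ring.
have c0 : A o0 o1 - A o0 o2 - A o4 o1 = w0 + w4 * y5 ^+ 2.
  by apply: (mulIf (lt0r_neq0 g4)); rewrite r0 k5; ring.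
have s01 := hsym o0 o1; have s02 := hsym o0 o2; have s03 := hsym o0 o3;
have s04 := hsym o0 o4; have s12 := hsym o1 o2; have s13 := hsym o1 o3;
have s14 := hsym o1 o4; have s23 := hsym o2 o3; have s24 := hsym o2 o4;
have s34 := hsym o3 o4.
clearbody y1 y2 y3 y4 y5.
clear hQ r0 r1 r2 r3 r4 hint hcl hH hF hsym hs.
apply/matrixP => i l; rewrite !(mxE, sum5).
elim/ord5P: i; elim/ord5P: l; rewrite /= ?mulr0n ?mulr1n.
all: rewrite !(mul0r, mulr0, mul1r, mulr1, addr0, add0r).
all: nra.
Qed.
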